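(* Let $k\ge2$, let $M$ be a $k$-permutable monoid and let $L\in\mathfrak{L}_{Rat}(M)$. Then there exists a positive integer $m$ such that for every word $w\in L$ with $|w|\ge m$ and every factorization $w=w_1w_2\cdots w_m$ with $|w_i|\ge 1$ for $1\le i\le m$, there exist integers $0\le i_0<i_1<\cdots<i_k<i_{k+1}\le m$ such that $w=\lambda W_1W_2\cdots W_k\mu$, where $\lambda=w_1\cdots w_{i_0}$ (empty if $i_0=0$), $\mu=w_{i_{k+1}}\cdots w_m$ (empty if $i_{k+1}=m$), and $W_j=w_{1+i_{j-1}}\cdots w_{i_j}$ for $j=1,\dots,k$, and there is a permutation $\sigma$ of $\{1,\dots,k\}$, different from the identity, such that the word $\lambda W_{\sigma(1)}W_{\sigma(2)}\cdots W_{\sigma(k)}\mu$ belongs to $L$.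
   Context: A monoid $M$ is $k$-permutable if for all $s_1,\dots,s_k\in M$ there is a permutation $\sigma\neq\mathrm{id}$ of $\{1,\dots,k\}$ with $s_1\cdots s_k=s_{\sigma(1)}\cdots s_{\sigma(k)}$. An $M$-automaton is a tuple $(Q,\Sigma,M,\delta,q_0,Q_a)$ with finite state set, input alphabet $\Sigma$, initial state $q_0$, accept states $Q_a$, and $\delta: Q\times(\Sigma\cup\{\varepsilon\})\to\mathbb{P}(Q\times M)$ finite-valued; $(q',m)\in\delta(q,\sigma)$ means reading $\sigma$ in state $q$ it may go to $q'$ and multiply the register on the right by $m$. A rational monoid automaton over $M$ is an $M$-automaton with rational subsets $I_0,I_1\subseteq M$ (closure of finite subsets under union, product, Kleene star); $w$ is accepted if some computation reading $w$ from $q_0$ to an accept state has register product $x$ with $x_0x\in I_1$ for some $x_0\in I_0$. $\mathfrak{L}_{Rat}(M)$ is the family of languages so accepted. *)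

(* Defs.v *)
From mathcomp Require Import all_boot all_fingroup.
Set Implicit Arguments. Unset Strict Implicit. Unset Printing Implicit Defensive.

(* propositional list membership (no decidable equality needed) *)
Fixpoint lIn (A : Type) (a : A) (l : list A) : Prop :=
  match l with nil => False | cons b l' => b = a \/ lIn a l' end.

Section Monoids.
Variables (M : Type) (mul : M -> M -> M) (one : M).

Definition is_monoid : Prop :=
  (forall x y z, mul x (mul y z) = mul (mul x y) z) /\
  (forall x, mul one x = x) /\ (forall x, mul x one = x).

Definition mprod (s : seq M) : M := foldr mul one s.

Definition k_permutable (k : nat) : Prop :=
  forall s : 'I_k -> M, exists sigma : 'S_k,
    sigma != 1%g /\
    mprod [seq s j | j <- enum 'I_k] = mprod [seq s (sigma j) | j <- enum 'I_k].

Inductive ratexp : Type :=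
| RFin of list M
| RUnion of ratexp & ratexp
| RProd of ratexp & ratexp
| RStar of ratexp.

Fixpoint rat_den (e : ratexp) : M -> Prop :=
  match e with
  | RFin s => fun x => lIn x s
  | RUnion e1 e2 => fun x => rat_den e1 x \/ rat_den e2 x
  | RProd e1 e2 => fun x => exists a b, rat_den e1 a /\ rat_den e2 b /\ x = mul a b
  | RStar e1 => fun x => exists l : list M,
                   (forall a, lIn a l -> rat_den e1 a) /\ x = mprod l
  end.

Definition rational_subset (A : M -> Prop) : Prop :=
  exists e : ratexp, forall x, A x <-> rat_den e x.

(* M-automaton with finite state set Q over alphabet Sigma;
   delta q None are epsilon-moves, delta returns a finite list *)
Variables (Sigma : finType) (Q : finType)
          (delta : Q -> option Sigma -> list (Q * M)).

(* run q w x q' : from q reading w, reaching q' with register product x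
   (register starts at one and is multiplied on the right) *)
Inductive run : Q -> seq Sigma -> M -> Q -> Prop :=
| run_nil q : run q [::] one q
| run_letter q a q1 m w x q2 :
    lIn (q1, m) (delta q (Some a)) -> run q1 w x q2 -> run q (a :: w) (mul m x) q2
| run_eps q q1 m w x q2 :
    lIn (q1, m) (delta q None) -> run q1 w x q2 -> run q w (mul m x) q2.

Definition rat_aut_accepts (q0 : Q) (Qa : {set Q}) (I0 I1 : M -> Prop)
    (w : seq Sigma) : Prop :=
  exists q x, run q0 w x q /\ q \in Qa /\ exists x0, I0 x0 /\ I1 (mul x0 x).
End Monoids.

Definition in_LRat (M : Type) (mul : M -> M -> M) (one : M) (Sigma : finType)
    (L : seq Sigma -> Prop) : Prop :=
  exists (Q : finType) (delta : Q -> option Sigma -> list (Q * M))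
         (q0 : Q) (Qa : {set Q}) (I0 I1 : M -> Prop),
    rational_subset mul one I0 /\ rational_subset mul one I1 /\
    forall w, L w <-> rat_aut_accepts mul one delta q0 Qa I0 I1 w.

(* block of factors w_{a+1} ... w_b of a factorization ws *)
Definition block (T : Type) (ws : seq (seq T)) (a b : nat) : seq T :=
  flatten (take (b - a) (drop a ws)).

(* Main.v *)
Require Import Defs.
From mathcomp Require Import all_boot all_fingroup.
Lemma size_sum_count (Q : finType) (l : seq Q) :
  size l = \sum_(q : Q) count (pred1 q) l.
Proof.
elim: l => [|a l IH] /=; first by rewrite big1.
rewrite big_split /= -IH (bigD1 a) //= eqxx big1 ?addn0 ?add1n // => q /negbTE.
by rewrite eq_sym => ->.
Qed.
Lemma pigeon (Q : finType) (k : nat) (l : seq Q) :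
  #|Q| * k < size l -> exists q, k < count (pred1 q) l.
Proof.
move=> H; have [q Hq | none] := pickP (fun q => k < count (pred1 q) l).
  by exists q.
move: H; rewrite ltnNge size_sum_count; case/negP.
rewrite -sum_nat_const; apply: leq_sum => q _; by rewrite leqNgt none.
Qed.
Section R.
Set Implicit Arguments.
Variables (M : Type) (mul : M -> M -> M) (one : M).
Hypothesis Hm : is_monoid mul one.
Variables (Sigma Q : finType) (delta : Q -> option Sigma -> list (Q * M)).
Notation run := (run mul one delta).

Lemma mulA x y z : mul x (mul y z) = mul (mul x y) z.
Proof. by case: Hm. Qed.
Lemma mul1 x : mul one x = x.
Proof. by case: Hm => _ []. Qed.
Lemma mul1r x : mul x one = x.
Proof. by case: Hm => _ []. Qed.

Lemma run_app q u xu p v xv q' :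
  run q u xu p -> run p v xv q' -> run q (u ++ v) (mul xu xv) q'.
Proof.
elim=> {q u xu p} [q|q a q1 m w x q2 Hd _ IH|q q1 m w x q2 Hd _ IH] Hv.
- by rewrite mul1.
- rewrite -mulA /=; exact: run_letter Hd (IH Hv).
- rewrite -mulA; exact: run_eps Hd (IH Hv).
Qed.

Lemma run_split q w x q' : run q w x q' -> forall u v, w = u ++ v ->
  exists p xu xv, run q u xu p /\ run p v xv q' /\ x = mul xu xv.
Proof.
elim=> {q w x q'} [q|q a q1 m w x q2 Hd Hr IH|q q1 m w x q2 Hd Hr IH] u v E.
- case: u E => //; case: v => // _. exists q, one, one; split; first exact: run_nil.
  split; [exact: run_nil | by rewrite mul1].
- case: u E => [|b u] /= E.
  + exists q, one, (mul m x); split; first exact: run_nil.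
    by rewrite -E; split; [exact: run_letter Hd Hr | rewrite mul1].
  + case: E => <- E; have [p [xu [xv [H1 [H2 ->]]]]] := IH _ _ E.
    exists p, (mul m xu), xv; split; first exact: run_letter Hd H1.
    by split => //; rewrite mulA.
- have [p [xu [xv [H1 [H2 ->]]]]] := IH _ _ E.
  exists p, (mul m xu), xv; split; first exact: run_eps Hd H1.
  by split => //; rewrite mulA.
Qed.

Lemma mprod_cat s1 s2 : mprod mul one (s1 ++ s2) = mul (mprod mul one s1) (mprod mul one s2).
Proof. elim: s1 => [|a s IH] /=; [by rewrite mul1 | by rewrite IH mulA]. Qed.

Lemma run_blocks (ws : seq (seq Sigma)) : forall u q x q', run q (flatten (u :: ws)) x q' ->
  exists (st : nat -> Q) (xf : nat -> M), st 0 = q /\ st (size (u :: ws)) = q' /\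
   (forall j, j < size (u :: ws) -> run (st j) (nth [::] (u :: ws) j) (xf j) (st j.+1)) /\
   x = mprod mul one [seq xf j | j <- iota 0 (size (u :: ws))].
Proof.
elim: ws => [|u' ws IH] u q x q' /=.
- rewrite cats0 => H. exists (fun j => if j is 0 then q else q'), (fun _ => x).
  do 2 split => //; split; first by case.
  by rewrite /= mul1r.
- move=> H; have [p [xu [xv [H1 [H2 ->]]]]] := run_split H u (u' ++ flatten ws) erefl.
  have [st [xf [E0 [E1 [Hj ->]]]]] := IH u' p xv q' H2.
  exists (fun j => if j is j'.+1 then st j' else q), (fun j => if j is j'.+1 then xf j' else xu).
  split => //; split => //; split.
  + case=> [_|j Hj'] /=; first by rewrite E0.
    exact: Hj.
  + rewrite /= -[2]/(1+1) iotaDl -map_comp. by do 3 congr mul; apply: eq_map => j; rewrite /= add1n.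
Qed.
End R.

Lemma chain (X : Type) (op : X -> X -> X) (e : X) (F : nat -> nat -> X) (i : nat -> nat) (N : nat) :
 (forall a, F a a = e) -> (forall a b c, a <= b -> b <= c -> op (F a b) (F b c) = F a c) ->
 (forall a b, a <= b -> b <= N -> i a <= i b) ->
 forall n s, s + n <= N -> foldr op e [seq F (i j) (i j.+1) | j <- iota s n] = F (i s) (i (s + n)).
Proof.
move=> F0 Fc Hi; elim=> [|n IH] s Hs /=; first by rewrite addn0 F0.
have HN : s.+1 + n <= N by rewrite addSnnS.
rewrite IH // -addSnnS Fc //; apply: Hi => //.
all: try by apply: leq_trans HN; rewrite ltnS leq_addr.
all: try by rewrite addSn ltnS leq_addr.
all: try by rewrite leq_addr.
Qed.

Lemma mono_of (i : nat -> nat) (N : nat) : (forall j, j < N -> i j < i j.+1) ->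
  forall a b, a <= b -> b <= N -> i a <= i b.
Proof.
move=> H a; elim=> [|b IH] Hab HbN.
  by rewrite leqn0 in Hab; rewrite (eqP Hab).
case: (ltngtP a b.+1) Hab => // [Hlt|->] _.
  by apply: leq_trans (IH Hlt (ltnW HbN)) (ltnW (H _ HbN)).
done.
Qed.

Lemma block_nil (T : Type) (ws : seq (seq T)) a : block ws a a = [::].
Proof. by rewrite /block subnn take0. Qed.

Lemma block_cat (T : Type) (ws : seq (seq T)) a b c : a <= b -> b <= c ->
  block ws a b ++ block ws b c = block ws a c.
Proof.
move=> Hab Hbc; rewrite /block -flatten_cat.
have -> : c - a = (b - a) + (c - b) by rewrite addnC addnBA // subnK // (leq_trans Hab).
by rewrite takeD drop_drop subnK.
Qed.

Section R2.
Set Implicit Arguments.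
Variables (M : Type) (mul : M -> M -> M) (one : M).
Hypothesis Hm : is_monoid mul one.
Variables (Sigma Q : finType) (delta : Q -> option Sigma -> list (Q * M)).
Notation run := (run mul one delta).

Definition P (xf : nat -> M) a b := mprod mul one [seq xf j | j <- iota a (b - a)].

Lemma P_nil xf a : P xf a a = one.
Proof. by rewrite /P subnn. Qed.

Lemma P_cat xf a b c : a <= b -> b <= c -> mul (P xf a b) (P xf b c) = P xf a c.
Proof.
move=> Hab Hbc; rewrite /P -mprod_cat //.
have -> : c - a = (b - a) + (c - b) by rewrite addnC addnBA // subnK // (leq_trans Hab).
by rewrite iotaD map_cat subnKC.
Qed.

Lemma run_block ws st xf :
  (forall j, j < size ws -> run (st j) (nth [::] ws j) (xf j) (st j.+1)) ->
  forall a b, a <= b -> b <= size ws -> run (st a) (block ws a b) (P xf a b) (st b).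
Proof.
move=> Hj a b Hab Hb; rewrite /block /P.
have -> : b = a + (b - a) by rewrite subnKC.
rewrite addKn; have : a + (b - a) <= size ws by rewrite subnKC.
move: (b - a) => d0; clear Hab Hb; elim: d0 a => [|d IH] a' Hd.
  by rewrite addn0 /= take0; exact: run_nil.
have Ha : a' < size ws by apply: leq_trans Hd; rewrite addnS ltnS leq_addr.
rewrite (drop_nth [::] Ha) /=.
apply: run_app => //; first exact: Hj.
by rewrite -addSnnS; apply: IH; rewrite addSnnS.
Qed.

Lemma run_list (I : Type) (W : I -> seq Sigma) (y : I -> M) q (l : seq I) :
  (forall j, run q (W j) (y j) q) ->
  run q (flatten [seq W j | j <- l]) (mprod mul one [seq y j | j <- l]) q.
Proof.
move=> H; elim: l => [|j l IH] /=; first exact: run_nil.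
exact: run_app.
Qed.
End R2.

Theorem lemma2 (k : nat) (M : Type) (mul : M -> M -> M) (one : M)
    (Sigma : finType) (L : seq Sigma -> Prop) :
  2 <= k ->
  is_monoid mul one ->
  k_permutable mul one k ->
  in_LRat mul one L ->
  exists m : nat, 0 < m /\
    forall (w : seq Sigma) (ws : seq (seq Sigma)),
      L w -> m <= size w ->
      size ws = m -> all (fun u => 0 < size u) ws -> flatten ws = w ->
      exists i : nat -> nat,
        (forall j, j <= k -> i j < i j.+1) /\ i k.+1 <= m /\
        let lambda := block ws 0 (i 0) in
        let W := fun j : 'I_k => block ws (i j) (i j.+1) in
        let mu := block ws (i k) m in
        w = lambda ++ flatten [seq W j | j <- enum 'I_k] ++ mu /\
        exists sigma : 'S_k, sigma != 1%g /\
          L (lambda ++ flatten [seq W (sigma j) | j <- enum 'I_k] ++ mu).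
Proof.
move=> Hk Hm Hperm [Q [delta [q0 [Qa [I0 [I1 [_ [_ HL]]]]]]]].
exists (#|Q| * k).+1; split => //.
set m := (#|Q| * k).+1.
move=> w ws Lw _ Hsz _ Hfl.
have [qf [x [Hrun [Hqf [x0 [Hx0 Hx1]]]]]] := (HL w).1 Lw.
case: ws Hsz Hfl => [|u ws'] // Hsz Hfl.
rewrite -Hfl in Hrun.
have [st [xf [E0 [E1 [Hj Ex]]]]] := run_blocks Hm ws' u Hrun.
set ws := u :: ws' in Hsz Hfl E1 Hj Ex *.
rewrite Hsz in E1 Ex.
have [q Hq] : exists q, k < count (pred1 q) [seq st j | j <- iota 0 m].
  by apply: pigeon; rewrite size_map size_iota.
set sl := [seq j <- iota 0 m | st j == q].
have Hsl : k < size sl by rewrite size_filter; move: Hq; rewrite count_map.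
have Hsort : sorted ltn sl by apply: sorted_filter => //; [exact: ltn_trans | exact: iota_ltn_sorted].
have Hmem : forall j, j \in sl -> j < m /\ st j = q.
  by move=> j; rewrite mem_filter mem_iota add0n => /andP [/eqP -> /andP [_ ->]].
set i := fun j => if j <= k then nth 0 sl j else m.
have Hin : forall j, j <= k -> i j \in sl by move=> j Hj'; rewrite /i Hj' mem_nth // (leq_ltn_trans Hj' Hsl).
have Hlt : forall j, j <= k -> i j < i j.+1.
  move=> j Hj'; case: (ltnP j k) => Hjk.
  - rewrite /i Hj' Hjk; apply: (sorted_ltn_nth ltn_trans) => //; rewrite inE.
    + exact: leq_ltn_trans Hj' Hsl.
    + exact: leq_ltn_trans Hjk Hsl.
  - by have [+ _] := Hmem _ (Hin _ Hj'); rewrite /i [j.+1 <= k]leqNgt ltnS Hjk.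
have HiK : i k.+1 = m by rewrite /i ltnn.
have Hst : forall j, j <= k -> st (i j) = q by move=> j Hj'; have [_ ->] := Hmem _ (Hin _ Hj').
have Hmono := @mono_of i k.+1 Hlt.
have HikM : i k < m by have [] := Hmem _ (Hin _ (leqnn k)).
exists i; split => //; split; first by rewrite HiK.
cbv zeta.
have Hmid : forall (X : Type) (op : X -> X -> X) (e : X) (F : nat -> nat -> X),
  (forall a, F a a = e) -> (forall a b c, a <= b -> b <= c -> op (F a b) (F b c) = F a c) ->
  foldr op e [seq F (i j) (i j.+1) | j : 'I_k <- enum 'I_k] = F (i 0) (i k).
  move=> X op e F F0 Fc; rewrite -[in RHS](add0n k) -(@chain X op e F i k.+1 F0 Fc Hmono k 0) //.
  by rewrite -val_enum_ord -map_comp.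
have Hsz' : size ws = m by [].
have Hi0 : 0 <= i 0 by [].
have Hi0k : i 0 <= i k by apply: Hmono.
split.
  rewrite -Hfl.
  have -> : flatten ws = block ws 0 m by rewrite /block subn0 drop0 -Hsz' take_size.
  have -> : flatten [seq block ws (i j) (i j.+1) | j : 'I_k <- enum 'I_k] = block ws (i 0) (i k).
    apply: Hmid; [exact: block_nil | by move=> *; exact: block_cat].
  have HkM := ltnW HikM; rewrite block_cat // block_cat //; exact: leq_trans Hi0k HkM.
have [sigma [Hs1 Hs2]] := Hperm (fun j : 'I_k => P mul one xf (i j) (i j.+1)).
exists sigma; split => //.
apply: (HL _).2; exists qf, x; split; last by split => //; exists x0.
have -> : x = mul (P mul one xf 0 (i 0)) (mul (P mul one xf (i 0) (i k)) (P mul one xf (i k) m)).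
  have HkM := ltnW HikM.
  rewrite Ex (P_cat Hm) // (P_cat Hm) //; last exact: leq_trans Hi0k HkM.

have <- : mprod mul one [seq P mul one xf (i j) (i j.+1) | j : 'I_k <- enum 'I_k] = P mul one xf (i 0) (i k).
  apply: Hmid; [exact: P_nil | move=> a b c Hab Hbc; exact: (P_cat Hm xf a b c Hab Hbc)].
rewrite Hs2.
have HkM := ltnW HikM.
have R1 : run mul one delta q0 (block ws 0 (i 0)) (P mul one xf 0 (i 0)) q.
  rewrite -E0 -(Hst 0 (leq0n _)); apply: run_block => //.
  by rewrite Hsz'; exact: leq_trans Hi0k HkM.
have R3 : run mul one delta q (block ws (i k) m) (P mul one xf (i k) m) qf.
  rewrite -E1 -(Hst k (leqnn k)); apply: run_block => //.
  by rewrite Hsz'.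
have R2 : run mul one delta q (flatten [seq block ws (i (sigma j)) (i (sigma j).+1) | j <- enum 'I_k])
   (mprod mul one [seq P mul one xf (i (sigma j)) (i (sigma j).+1) | j <- enum 'I_k]) q.
  apply: (run_list Hm) => j.
  rewrite -{1}(Hst (sigma j) (ltnW (ltn_ord _))) -(Hst (sigma j).+1 (ltn_ord _)).
  apply: run_block => //; first exact: ltnW (Hlt _ (ltnW (ltn_ord _))).
  rewrite Hsz' -HiK; apply: Hmono => //; exact: ltnW (ltn_ord _).
exact: (run_app Hm R1 (run_app Hm R2 R3)).
Qed.
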